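(* In the Gaussian sequential learning model with binary states described in the context, for any privacy budget $\varepsilon\in(0,\infty)$, asymptotic learning occurs under the smooth randomized response strategy, i.e., $\lim_{n\to\infty}\mathbb{P}(a_n=\theta)=1$.
   Context: Gaussian model: unknown state $\theta\in\{-1,+1\}$ with uniform prior; agents $n=1,2,\dots$ act in sequence; agent $n$ privately observes $s_n\sim\mathcal{N}(\theta,\sigma^2)$, i.i.d. given $\theta$, $\sigma>0$. The public log-likelihood ratio is $l_n=\log\frac{\mathbb{P}(\theta=+1\mid x_1,\dots,x_{n-1})}{\mathbb{P}(\theta=-1\mid x_1,\dots,x_{n-1})}$ ($l_1=0$), where $x_i$ are reported actions. With $t(l)=-\sigma^2l/2$, agent $n$'s intended action is $a_n=+1$ if $s_n>t(l_n)$ and $a_n=-1$ otherwise. Under the smooth randomized response strategy with budget $\varepsilon$, the agent reports $x_n=a_n$ with probability $1-u_n(s_n)$ and $x_n=-a_n$ with probability $u_n(s_n)=\frac12e^{-\varepsilon|s_n-t(l_n)|}$; the public updates $l_{n+1}=l_n+\log\frac{\mathbb{P}(x_n\mid l_n,\theta=+1)}{\mathbb{P}(x_n\mid l_n,\theta=-1)}$ by Bayes' rule. Asymptotic learning means $\lim_{n\to\infty}\mathbb{P}(a_n=\theta)=1$. *)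

(* Defs.v *)
From Stdlib Require Import Reals.
From Coquelicot Require Import Coquelicot.
Open Scope R_scope.

(* Binary values (state theta, actions a_n, reports x_n) are encoded as bool:
   true = +1, false = -1. *)
Definition sgn (b : bool) : R := if b then 1 else -1.

Definition gauss_pdf (sigma : R) (theta : bool) (s : R) : R :=
  exp (- (s - sgn theta) ^ 2 / (2 * sigma ^ 2)) / (sigma * sqrt (2 * PI)).

Definition int_R (f : R -> R) : R :=
  RInt_gen f (Rbar_locally m_infty) (Rbar_locally p_infty).

Definition thr (sigma l : R) : R := - sigma ^ 2 * l / 2.

Definition intended (sigma l s : R) : bool :=
  if Rlt_dec (thr sigma l) s then true else false.

Definition flip_prob (sigma eps l s : R) : R :=
  / 2 * exp (- eps * Rabs (s - thr sigma l)).

(* P(x_n = x | l_n = l, theta): probability that the agent reports x. *)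
Definition report_prob (sigma eps l : R) (theta x : bool) : R :=
  int_R (fun s => gauss_pdf sigma theta s *
    (if Bool.eqb (intended sigma l s) x
     then 1 - flip_prob sigma eps l s
     else flip_prob sigma eps l s)).

Definition llr_update (sigma eps l : R) (x : bool) : R :=
  l + ln (report_prob sigma eps l true x / report_prob sigma eps l false x).

Definition correct_given (sigma l : R) (theta : bool) : R :=
  int_R (fun s => gauss_pdf sigma theta s *
    (if Bool.eqb (intended sigma l s) theta then 1 else 0)).

(* Given theta and current public LLR l, the probability that the agent k steps
   later takes the correct action: law of total probability over the next
   k reports (the public belief evolves as a Markov chain given theta). *)
Fixpoint correct_after (sigma eps : R) (theta : bool) (k : nat) (l : R) : R :=
  match k with
  | O => correct_given sigma l theta
  | S k' => report_prob sigma eps l theta true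
              * correct_after sigma eps theta k' (llr_update sigma eps l true)
          + report_prob sigma eps l theta false
              * correct_after sigma eps theta k' (llr_update sigma eps l false)
  end.

(* P(a_n = theta) for agent n >= 1 (l_1 = 0, uniform prior on theta). *)
Definition prob_correct (sigma eps : R) (n : nat) : R :=
  / 2 * (correct_after sigma eps true (n - 1) 0
         + correct_after sigma eps false (n - 1) 0).

(* Main.v *)
Require Import Defs.
From Stdlib Require Import Reals Lra Lia Psatz.
From Coquelicot Require Import Coquelicot.
Open Scope R_scope.

Definition Integ (F : R -> R) (v : R) : Prop :=
  (forall a b, ex_RInt F a b) /\
  exists L1 L2 : R, is_lim (fun x => RInt F 0 x) p_infty L1 /\
    is_lim (fun x => RInt F 0 x) m_infty L2 /\ v = L1 - L2.

Lemma RInt_diff0 F a b : (forall a b, ex_RInt F a b) ->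
  RInt F a b = RInt F 0 b - RInt F 0 a.
Proof.
  intros H. pose proof (RInt_Chasles F 0 a b (H _ _) (H _ _)) as E.
  unfold plus in E; simpl in E. lra.
Qed.

Lemma Integ_gen F v : Integ F v ->
  is_RInt_gen F (Rbar_locally m_infty) (Rbar_locally p_infty) v.
Proof.
  intros [Hex [L1 [L2 [H1 [H2 ->]]]]].
  unfold is_RInt_gen.
  apply filterlimi_lim_ext with (f := fun ab => RInt F (fst ab) (snd ab)).
  - intros ab; apply (RInt_correct (V:=R_CompleteNormedModule)), Hex.
  - apply filterlim_ext with (f := fun ab => RInt F 0 (snd ab) - RInt F 0 (fst ab)).
    + intros [a b]; simpl. symmetry; apply RInt_diff0; auto.
    + eapply filterlim_comp_2 with (h := Rminus).
      * eapply filterlim_comp. apply filterlim_snd. apply H1.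
      * eapply filterlim_comp. apply filterlim_fst. apply H2.
      * change (filterlim (fun x : R*R => plus (fst x) (opp (snd x)))
          (filter_prod (locally L1) (locally L2)) (locally (plus L1 (opp L2)))).
        apply (filterlim_comp_2 (F:=filter_prod (locally L1) (locally L2))
          (fun x : R*R => fst x) (fun x : R*R => opp (snd x)) (fun a b : R => plus a b) (G:=locally L1) (H:=locally (opp L2))).
        -- apply filterlim_fst.
        -- eapply filterlim_comp. apply filterlim_snd. apply (filterlim_opp (K:=R_AbsRing) (V:=R_NormedModule)).
        -- apply (filterlim_plus (K:=R_AbsRing) (V:=R_NormedModule)).
Qed.

Lemma Integ_int_R F v : Integ F v -> int_R F = v.
Proof.
  intros H. apply is_RInt_gen_unique. apply Integ_gen; auto.
Qed.

Lemma Integ_ext F G v : (forall x, F x = G x) -> Integ F v -> Integ G v.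
Proof.
  intros E [Hex [L1 [L2 [H1 [H2 H3]]]]].
  split.
  - intros a b; apply ex_RInt_ext with F; auto.
  - exists L1, L2. repeat split; auto.
    + eapply is_lim_ext; [|apply H1]. intros y; simpl. apply RInt_ext; auto.
    + eapply is_lim_ext; [|apply H2]. intros y; simpl. apply RInt_ext; auto.
Qed.

Lemma Integ_plus F G v w : Integ F v -> Integ G w ->
  Integ (fun x => F x + G x) (v + w).
Proof.
  intros [Hex [L1 [L2 [H1 [H2 H3]]]]] [Gex [M1 [M2 [G1 [G2 G3]]]]].
  split.
  - intros a b; apply (ex_RInt_plus (V:=R_NormedModule) F G); auto.
  - exists (L1 + M1), (L2 + M2). repeat split.
    + eapply is_lim_ext.
      intros y; symmetry; apply (RInt_plus (V:=R_CompleteNormedModule) F G); auto.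
      apply (is_lim_plus _ _ _ L1 M1); auto. simpl. reflexivity.
    + eapply is_lim_ext.
      intros y; symmetry; apply (RInt_plus (V:=R_CompleteNormedModule) F G); auto.
      apply (is_lim_plus _ _ _ L2 M2); auto. simpl. reflexivity.
    + lra.
Qed.

Lemma Integ_scal c F v : Integ F v -> Integ (fun x => c * F x) (c * v).
Proof.
  intros [Hex [L1 [L2 [H1 [H2 H3]]]]].
  split.
  - intros a b; apply (ex_RInt_scal (V:=R_NormedModule) F a b c); auto.
  - exists (c * L1), (c * L2). repeat split.
    + eapply is_lim_ext.
      intros y; symmetry; apply (RInt_scal (V:=R_CompleteNormedModule) F 0 y c); auto.
      apply (is_lim_scal_l _ c _ L1); auto.
    + eapply is_lim_ext.
      intros y; symmetry; apply (RInt_scal (V:=R_CompleteNormedModule) F 0 y c); auto.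
      apply (is_lim_scal_l _ c _ L2); auto.
    + subst; ring.
Qed.

Lemma Integ_minus F G v w : Integ F v -> Integ G w ->
  Integ (fun x => F x - G x) (v - w).
Proof.
  intros HF HG.
  apply Integ_ext with (fun x => F x + (-1) * G x).
  intros; ring.
  replace (v - w) with (v + (-1) * w) by ring.
  apply Integ_plus; auto. apply Integ_scal; auto.
Qed.

Lemma Integ_nonneg_ge F v a b : (forall x, 0 <= F x) -> Integ F v -> a <= b ->
  RInt F a b <= v.
Proof.
  intros Hpos [Hex [L1 [L2 [H1 [H2 H3]]]]] Hab.
  rewrite RInt_diff0 by auto.
  assert (B1 : RInt F 0 b <= L1).
  { assert (Rbar_le (RInt F 0 b) L1).
    { apply (is_lim_le_loc (fun _ => RInt F 0 b) (fun x => RInt F 0 x) p_infty).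
      - exists b. intros x Hx.
        assert (0 <= RInt F b x).
        { apply RInt_ge_0; auto. lra. }
        rewrite (RInt_diff0 F b x) in H by auto. lra.
      - apply is_lim_const.
      - auto. }
    simpl in H; auto. }
  assert (B2 : L2 <= RInt F 0 a).
  { assert (Rbar_le L2 (RInt F 0 a)).
    { apply (is_lim_le_loc (fun x => RInt F 0 x) (fun _ => RInt F 0 a) m_infty).
      - exists a. intros x Hx.
        assert (0 <= RInt F x a).
        { apply RInt_ge_0; auto. lra. }
        rewrite (RInt_diff0 F x a) in H by auto. lra.
      - auto.
      - apply is_lim_const. }
    simpl in H; auto. }
  lra.
Qed.

Lemma Integ_nonneg F v : (forall x, 0 <= F x) -> Integ F v -> 0 <= v.
Proof.
  intros H1 H2. pose proof (Integ_nonneg_ge F v 0 0 H1 H2 (Rle_refl 0)).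
  rewrite RInt_point in H. unfold zero in H; simpl in H. auto.
Qed.

Lemma Integ_le F G v w : (forall x, F x <= G x) -> Integ F v -> Integ G w -> v <= w.
Proof.
  intros H HF HG.
  assert (0 <= w - v).
  { apply (Integ_nonneg (fun x => G x - F x)). intros x; specialize (H x); lra.
    apply Integ_minus; auto. }
  lra.
Qed.


Lemma RInt_abs_dom F G u v : (forall a b, ex_RInt F a b) -> (forall a b, ex_RInt G a b) ->
  (forall x, Rabs (F x) <= G x) -> Rabs (RInt F u v) <= Rabs (RInt G u v).
Proof.
  intros HF HG Hd.
  assert (K : forall a b, a <= b -> Rabs (RInt F a b) <= Rabs (RInt G a b)).
  { intros a b Hab.
    assert (Rabs (RInt F a b) <= RInt G a b).
    { apply (norm_RInt_le (V:=R_NormedModule) F G a b); auto.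
      apply (RInt_correct (V:=R_CompleteNormedModule)); auto.
      apply (RInt_correct (V:=R_CompleteNormedModule)); auto. }
    eapply Rle_trans; [apply H|apply Rle_abs]. }
  destruct (Rle_dec u v) as [h|h]. apply K; auto.
  rewrite <- (opp_RInt_swap (V:=R_CompleteNormedModule) F) by auto.
  rewrite <- (opp_RInt_swap (V:=R_CompleteNormedModule) G) by auto.
  unfold opp; simpl. rewrite !Rabs_Ropp. apply K; lra.
Qed.

Lemma lim_dom (Fl : Rbar) F G : (forall a b, ex_RInt F a b) -> (forall a b, ex_RInt G a b) ->
  (forall x, Rabs (F x) <= G x) ->
  (exists L : R, is_lim (fun x => RInt G 0 x) Fl L) ->
  exists L : R, is_lim (fun x => RInt F 0 x) Fl L.
Proof.
  intros HF HG Hd [L HL].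
  assert (PF : ProperFilter (Rbar_locally' Fl)).
  { apply Rbar_locally'_filter. }
  destruct (proj1 (filterlim_locally_cauchy (F := Rbar_locally' Fl) (fun x => RInt F 0 x))) as [y Hy].
  - intros eps.
    destruct (proj2 (filterlim_locally_cauchy (F := Rbar_locally' Fl) (fun x => RInt G 0 x))) with eps as [P [HP1 HP2]].
    exists L; exact HL.
    exists P; split; auto.
    intros u v Hu Hv. specialize (HP2 u v Hu Hv).
    revert HP2. unfold ball; simpl. unfold AbsRing_ball; simpl. unfold abs, minus, plus, opp; simpl.
    intros HH.
    pose proof (RInt_abs_dom F G u v HF HG Hd).
    rewrite (RInt_diff0 F u v HF) in H. rewrite (RInt_diff0 G u v HG) in H.
    unfold Rminus in H. lra.
  - exists y. exact Hy.
Qed.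

Lemma Integ_dom F G w : (forall a b, ex_RInt F a b) ->
  (forall x, Rabs (F x) <= G x) -> Integ G w -> exists v, Integ F v.
Proof.
  intros HF Hd [HG [L1 [L2 [H1 [H2 H3]]]]].
  destruct (lim_dom p_infty F G HF HG Hd) as [M1 K1]. exists L1; auto.
  destruct (lim_dom m_infty F G HF HG Hd) as [M2 K2]. exists L2; auto.
  exists (M1 - M2). split; auto. exists M1, M2; auto.
Qed.


Definition g0 (t : R) := exp (- (t * t)).
Definition Pg (x : R) := RInt g0 0 x.
Definition Bf (x t : R) := exp (- (x * x) * (1 + t * t)) / (1 + t * t).
Definition Bg (x : R) := RInt (Bf x) 0 1.

Lemma g0_cont x : continuous g0 x.
Proof. apply (ex_derive_continuous (V:=R_NormedModule)). unfold g0. auto_derive. auto. Qed.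

Lemma g0_ex a b : ex_RInt g0 a b.
Proof. apply (ex_RInt_continuous (V:=R_CompleteNormedModule)). intros; apply g0_cont. Qed.

Lemma Pg_deriv (x : R) : is_derive Pg x (g0 x).
Proof.
  apply (is_derive_RInt (V:=R_CompleteNormedModule) g0 Pg 0 x).
  - apply filter_forall. intros b. apply (RInt_correct (V:=R_CompleteNormedModule)), g0_ex.
  - apply g0_cont.
Qed.

Lemma one_tt_pos t : 0 < 1 + t * t.
Proof. nra. Qed.

Lemma Bf_cont x t : continuous (Bf x) t.
Proof.
  apply (ex_derive_continuous (V:=R_NormedModule)). unfold Bf. auto_derive.
  pose proof (one_tt_pos t). lra.
Qed.

Lemma Bf_derive u v : Derive (fun z => Bf z v) u = -2 * u * exp (- (u * u) * (1 + v * v)).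
Proof.
  apply is_derive_unique. unfold Bf. auto_derive.
  pose proof (one_tt_pos v); lra.
  pose proof (one_tt_pos v). field. lra.
Qed.

Lemma RInt_scal_R f a b c : ex_RInt f a b -> RInt (fun t => c * f t) a b = c * RInt f a b.
Proof. intros H. apply (RInt_scal (V:=R_CompleteNormedModule)); auto. Qed.

Lemma RInt_lin_R f u v a b : ex_RInt f (u*a+v) (u*b+v) ->
  RInt (fun y => u * f (u*y+v)) a b = RInt f (u*a+v) (u*b+v).
Proof. intros H. apply (RInt_comp_lin (V:=R_CompleteNormedModule)); auto. Qed.

Lemma c2d_exp f x y : continuity_2d_pt f x y -> continuity_2d_pt (fun u v => exp (f u v)) x y.
Proof.
  intros H. apply continuity_2d_pt_filterlim. apply continuity_2d_pt_filterlim in H.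
  eapply filterlim_comp; [apply H|].
  apply (ex_derive_continuous (V:=R_NormedModule) exp). auto_derive; auto.
Qed.

Lemma Bg_deriv (x : R) : is_derive Bg x (-2 * g0 x * Pg x).
Proof.
  assert (E : -2 * g0 x * Pg x = RInt (fun t => Derive (fun u => Bf u t) x) 0 1).
  { rewrite (RInt_ext _ (fun t => (-2 * g0 x) * (x * (g0 (x * t + 0))))).
    2:{ intros t _. rewrite Bf_derive. unfold g0.
        replace (- (x * x) * (1 + t * t)) with (- (x * x) + - ((x * t + 0) * (x * t + 0))) by ring.
        rewrite exp_plus. assert (HH: forall a b c : R, -2 * c * (a * b) = -2 * a * (c * b)) by (intros; ring). apply HH. }
    rewrite RInt_scal_R.
    2:{ apply (ex_RInt_continuous (V:=R_CompleteNormedModule)). intros z _.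
        apply (ex_derive_continuous (V:=R_NormedModule)). unfold g0.
        auto_derive; auto. }
    rewrite RInt_lin_R.
    2: apply g0_ex.
    unfold Pg. f_equal. f_equal; ring. }
  rewrite E.
  apply (is_derive_RInt_param Bf 0 1 x).
  - apply filter_forall. intros y t _. unfold Bf. auto_derive.
    pose proof (one_tt_pos t); lra.
  - intros t _.
    apply continuity_2d_pt_ext with (fun u v => -2 * u * exp (- (u * u) * (1 + v * v))).
    + intros; rewrite Bf_derive; auto.
    + apply continuity_2d_pt_mult.
      apply continuity_2d_pt_mult. apply continuity_2d_pt_const. apply continuity_2d_pt_id1.
      apply c2d_exp. apply continuity_2d_pt_mult.
      apply continuity_2d_pt_opp. apply continuity_2d_pt_mult; apply continuity_2d_pt_id1.
      apply continuity_2d_pt_plus. apply continuity_2d_pt_const.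
      apply continuity_2d_pt_mult; apply continuity_2d_pt_id2.
  - apply filter_forall. intros y.
    apply (ex_RInt_continuous (V:=R_CompleteNormedModule)). intros; apply Bf_cont.
Qed.

Lemma Bf_ex x a b : ex_RInt (Bf x) a b.
Proof. apply (ex_RInt_continuous (V:=R_CompleteNormedModule)). intros; apply Bf_cont. Qed.

Lemma H_const (x : R) : Pg x ^ 2 + Bg x = Pg 0 ^ 2 + Bg 0.
Proof.
  assert (D : forall y : R, is_derive (fun z => Pg z ^ 2 + Bg z) y 0).
  { intros y.
    replace 0 with (INR 2 * g0 y * Pg y ^ Init.Nat.pred 2 + (-2 * g0 y * Pg y)) by (simpl; ring).
    apply (is_derive_plus (K:=R_AbsRing) (V:=R_NormedModule)).
    - apply (is_derive_pow (fun z => Pg z) 2 y (g0 y)). apply Pg_deriv.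
    - apply Bg_deriv. }
  assert (I1 : is_RInt (fun _ => 0) 0 x (minus (Pg x ^ 2 + Bg x) (Pg 0 ^ 2 + Bg 0))).
  { apply (is_RInt_derive (V:=R_CompleteNormedModule) (fun z => Pg z ^ 2 + Bg z) (fun _ => 0)).
    - intros; apply D.
    - intros; apply continuous_const. }
  assert (I2 : is_RInt (fun _ : R => 0) 0 x 0).
  { replace 0 with (scal (x - 0) 0) at 2.
    apply (is_RInt_const (V:=R_NormedModule)). unfold scal; simpl; unfold mult; simpl. ring. }
  pose proof (is_RInt_unique _ _ _ _ I1) as U1.
  pose proof (is_RInt_unique _ _ _ _ I2) as U2.
  rewrite U1 in U2. unfold minus, plus, opp in U2; simpl in U2. lra.
Qed.

Lemma Pg0 : Pg 0 = 0.
Proof. unfold Pg. rewrite RInt_point. reflexivity. Qed.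

Lemma Bg0 : Bg 0 = PI / 4.
Proof.
  unfold Bg. rewrite <- atan_1.
  apply is_RInt_unique.
  replace (atan 1) with (minus (atan 1) (atan 0)).
  2:{ rewrite atan_0. unfold minus, plus, opp; simpl. ring. }
  apply (is_RInt_ext (V:=R_NormedModule) (fun t => / (1 + t²))).
  { intros t _. unfold Bf, Rsqr. replace (- (0 * 0) * (1 + t * t)) with 0 by ring.
    rewrite exp_0. unfold Rdiv; rewrite Rmult_1_l; reflexivity. }
  apply (is_RInt_derive (V:=R_CompleteNormedModule) atan).
  - intros; apply is_derive_atan.
  - intros y _. apply (ex_derive_continuous (V:=R_NormedModule)). unfold Rsqr. auto_derive.
    pose proof (one_tt_pos y); lra.
Qed.

Lemma Bg_bounds (x : R) : 0 <= Bg x <= exp (- (x * x)).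
Proof.
  split.
  - apply RInt_ge_0. lra. apply Bf_ex. intros t _. unfold Bf.
    apply Rlt_le, Rdiv_lt_0_compat. apply exp_pos. apply one_tt_pos.
  - replace (exp (- (x * x))) with (RInt (fun _ => exp (- (x * x))) 0 1).
    2:{ rewrite (RInt_const (V:=R_CompleteNormedModule)). unfold scal; simpl; unfold mult; simpl. ring. }
    apply RInt_le. lra. apply Bf_ex. apply (ex_RInt_const (V:=R_NormedModule)).
    intros t Ht. unfold Bf. pose proof (one_tt_pos t).
    apply Rle_trans with (exp (- (x * x) * (1 + t * t))).
    + apply Rmult_le_reg_r with (1 + t * t). lra.
      unfold Rdiv. rewrite Rmult_assoc, Rinv_l by lra. pose proof (exp_pos (- (x * x) * (1 + t * t))).
      nra.
    + apply exp_le_3 || (destruct (Req_dec (- (x * x) * (1 + t * t)) (- (x*x))) as [E|E]; [rewrite E; lra|]).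
      apply Rlt_le, exp_increasing. nra.
Qed.

Lemma exp_negsq_lim : is_lim (fun x => exp (- (x * x))) p_infty 0.
Proof.
  apply (is_lim_comp (fun y => exp y) (fun x => - (x * x)) p_infty 0 m_infty).
  - apply is_lim_exp_m.
  - apply (is_lim_ext (fun x => - (x * x))). auto.
    replace m_infty with (Rbar_opp (Rbar_mult p_infty p_infty)) by reflexivity.
    apply is_lim_opp. apply is_lim_mult; try apply is_lim_id. simpl; auto.
  - exists 0. intros; discriminate.
Qed.

Lemma Pg_nonneg x : 0 <= x -> 0 <= Pg x.
Proof.
  intros Hx. unfold Pg. apply RInt_ge_0; auto. apply g0_ex. intros; unfold g0. apply Rlt_le, exp_pos.
Qed.

Lemma Pg_lim_p : is_lim Pg p_infty (sqrt PI / 2).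
Proof.
  assert (L2 : is_lim (fun x => Pg x ^ 2) p_infty (PI / 4)).
  { apply (is_lim_ext (fun x => PI / 4 - Bg x)).
    { intros y. pose proof (H_const y). rewrite Pg0, Bg0 in H. simpl in *. lra. }
    replace (Finite (PI / 4)) with (Finite (PI / 4 - 0)) by (f_equal; ring).
    apply (is_lim_minus _ _ _ (PI/4) 0). apply is_lim_const.
    apply (is_lim_le_le_loc (fun _ => 0) (fun x => exp (- (x * x)))).
    { exists 0. intros; apply Bg_bounds. }
    apply is_lim_const. apply exp_negsq_lim.
    simpl. unfold is_Rbar_minus, is_Rbar_plus; simpl. f_equal. }
  apply (is_lim_ext_loc (fun x => sqrt (Pg x ^ 2))).
  { exists 0. intros y Hy. rewrite sqrt_pow2; auto. apply Pg_nonneg; lra. }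
  replace (sqrt PI / 2) with (sqrt (PI / 4)).
  2:{ replace (PI / 4) with (PI * / (2 * 2)) by field.
      rewrite sqrt_mult_alt. rewrite sqrt_inv, sqrt_square by lra. field.
      pose proof PI_RGT_0; lra. }
  unfold is_lim. eapply filterlim_comp. apply L2.
  apply continuity_pt_filterlim. apply continuity_pt_sqrt. pose proof PI_RGT_0; lra.
Qed.

Lemma Pg_opp x : Pg (- x) = - Pg x.
Proof.
  unfold Pg.
  assert (E : RInt (fun y => -1 * g0 (-1 * y + 0)) 0 x = RInt g0 (-1 * 0 + 0) (-1 * x + 0))
    by (apply RInt_lin_R; apply g0_ex).
  replace (-1 * 0 + 0) with 0 in E by ring. replace (-1 * x + 0) with (- x) in E by ring.
  rewrite <- E.
  rewrite RInt_scal_R.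
  - replace (RInt (fun y => g0 (-1 * y + 0)) 0 x) with (RInt g0 0 x). lra.
    apply RInt_ext. intros; unfold g0. f_equal. ring.
  - apply (ex_RInt_ext g0). intros; unfold g0; f_equal; ring. apply g0_ex.
Qed.

Lemma Pg_lim_m : is_lim Pg m_infty (- (sqrt PI / 2)).
Proof.
  apply (is_lim_ext (fun x => - Pg (- x))).
  { intros y. rewrite Pg_opp. ring. }
  replace (Finite (- (sqrt PI / 2))) with (Rbar_opp (sqrt PI / 2)) by reflexivity.
  apply is_lim_opp.
  apply (is_lim_comp Pg (fun x => - x) m_infty (sqrt PI / 2) p_infty).
  - apply Pg_lim_p.
  - replace p_infty with (Rbar_opp m_infty) by reflexivity. apply is_lim_opp, is_lim_id.
  - exists 0. intros; discriminate.
Qed.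

Lemma Integ_g0 : Integ g0 (sqrt PI).
Proof.
  split. apply g0_ex.
  exists (sqrt PI / 2), (- (sqrt PI / 2)). split. apply Pg_lim_p. split. apply Pg_lim_m. field.
Qed.

Lemma Integ_lin F v u w : 0 < u -> Integ F v -> Integ (fun s => u * F (u * s + w)) v.
Proof.
  intros Hu [Hex [L1 [L2 [H1 [H2 H3]]]]].
  assert (E : forall x, RInt (fun s => u * F (u * s + w)) 0 x = RInt F 0 (u * x + w) - RInt F 0 w).
  { intros x. rewrite RInt_lin_R by auto. rewrite RInt_diff0 by auto.
    replace (u * 0 + w) with w by ring. auto. }
  split.
  - intros a b. apply (ex_RInt_comp_lin (V:=R_NormedModule) F u w a b). auto.
  - exists (L1 - RInt F 0 w), (L2 - RInt F 0 w). split; [|split].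
    + eapply is_lim_ext. intros; symmetry; apply E.
      apply (is_lim_minus _ _ _ L1 (RInt F 0 w)).
      * apply (is_lim_comp (fun y => RInt F 0 y) (fun x => u * x + w) p_infty L1 p_infty); auto.
        replace p_infty with (Rbar_plus (Rbar_mult u p_infty) w) at 2.
        apply is_lim_plus with (Rbar_mult u p_infty) w. apply is_lim_scal_l, is_lim_id.
        apply is_lim_const. simpl. destruct (Rle_dec 0 u); [|lra]. destruct (Rle_lt_or_eq_dec 0 u r); [|lra]. simpl. reflexivity.
        simpl. destruct (Rle_dec 0 u); [|lra]. destruct (Rle_lt_or_eq_dec 0 u r); [|lra]. reflexivity.
        exists 0; intros; discriminate.
      * apply is_lim_const.
      * simpl. reflexivity.
    + eapply is_lim_ext. intros; symmetry; apply E.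
      apply (is_lim_minus _ _ _ L2 (RInt F 0 w)).
      * apply (is_lim_comp (fun y => RInt F 0 y) (fun x => u * x + w) m_infty L2 m_infty); auto.
        replace m_infty with (Rbar_plus (Rbar_mult u m_infty) w) at 2.
        apply is_lim_plus with (Rbar_mult u m_infty) w. apply is_lim_scal_l, is_lim_id.
        apply is_lim_const. simpl. destruct (Rle_dec 0 u); [|lra]. destruct (Rle_lt_or_eq_dec 0 u r); [|lra]. simpl. reflexivity.
        simpl. destruct (Rle_dec 0 u); [|lra]. destruct (Rle_lt_or_eq_dec 0 u r); [|lra]. reflexivity.
        exists 0; intros; discriminate.
      * apply is_lim_const.
      * simpl. reflexivity.
    + rewrite H3. ring.
Qed.

Definition gpdf (sigma m s : R) : R :=
  exp (- (s - m) ^ 2 / (2 * sigma ^ 2)) / (sigma * sqrt (2 * PI)).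

Lemma Integ_gpdf sigma m : 0 < sigma -> Integ (gpdf sigma m) 1.
Proof.
  intros Hs.
  assert (S2 : 0 < sqrt 2) by (apply sqrt_lt_R0; lra).
  assert (SP : 0 < sqrt PI) by (apply sqrt_lt_R0; pose proof PI_RGT_0; lra).
  set (u := / (sigma * sqrt 2)).
  assert (Hu : 0 < u) by (unfold u; apply Rinv_0_lt_compat, Rmult_lt_0_compat; auto).
  pose proof (Integ_lin g0 (sqrt PI) u (- m * u) Hu Integ_g0) as H.
  apply (Integ_scal (/ sqrt PI)) in H.
  replace (/ sqrt PI * sqrt PI) with 1 in H by (field; lra).
  eapply Integ_ext; [|exact H].
  intros s. unfold gpdf, g0.
  rewrite sqrt_mult_alt by lra.
  replace (- ((u * s + - m * u) * (u * s + - m * u))) with (- (s - m) ^ 2 / (2 * sigma ^ 2)).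
  - unfold u. field. split; lra.
  - unfold u. field_simplify. 2: split; lra.
    rewrite pow2_sqrt by lra. field. lra. lra.
Qed.

Lemma Integ_unique F v w : Integ F v -> Integ F w -> v = w.
Proof. intros H1 H2. rewrite <- (Integ_int_R F v), <- (Integ_int_R F w); auto. Qed.

Lemma Integ_tilt sigma m c : 0 < sigma ->
  Integ (fun s => gpdf sigma m s * exp (c * s)) (exp (c * m + c ^ 2 * sigma ^ 2 / 2)).
Proof.
  intros Hs.
  pose proof (Integ_scal (exp (c * m + c ^ 2 * sigma ^ 2 / 2)) _ _ (Integ_gpdf sigma (m + c * sigma ^ 2) Hs)) as H.
  rewrite Rmult_1_r in H. eapply Integ_ext; [|exact H].
  intros s. unfold gpdf.
  replace (- (s - (m + c * sigma ^ 2)) ^ 2 / (2 * sigma ^ 2)) with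
    ((- (s - m) ^ 2 / (2 * sigma ^ 2) + c * s) - (c * m + c ^ 2 * sigma ^ 2 / 2)).
  2:{ field. lra. }
  set (A := - (s - m) ^ 2 / (2 * sigma ^ 2)). set (K := c * m + c ^ 2 * sigma ^ 2 / 2).
  replace (A + c * s - K) with (A + c * s + - K) by ring.
  rewrite !exp_plus. rewrite exp_Ropp.
  pose proof (exp_pos K). field.
  assert (0 < sqrt (2 * PI)) by (apply sqrt_lt_R0; pose proof PI_RGT_0; lra). repeat split; lra.
Qed.


Lemma ex_pw (F F1 F2 : R -> R) t : (forall x, continuous F1 x) -> (forall x, continuous F2 x) ->
  (forall s, s < t -> F s = F1 s) -> (forall s, t < s -> F s = F2 s) ->
  forall a b, ex_RInt F a b.
Proof.
  intros C1 C2 E1 E2.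
  assert (K : forall a, ex_RInt F a t).
  { intros a. destruct (Rle_dec a t).
    - apply (ex_RInt_ext F1). intros x Hx. rewrite E1; auto.
      rewrite Rmax_right in Hx; lra.
      apply (ex_RInt_continuous (V:=R_CompleteNormedModule)); auto.
    - apply (ex_RInt_ext F2). intros x Hx. rewrite E2; auto.
      rewrite Rmin_right in Hx; lra.
      apply (ex_RInt_continuous (V:=R_CompleteNormedModule)); auto. }
  intros a b. apply (ex_RInt_Chasles F a t b). apply K. apply (ex_RInt_swap (V:=R_NormedModule)), K.
Qed.

Ltac nzt := repeat split; first [exact I | apply Rgt_not_eq, Rmult_lt_0_compat; auto; fail | auto].

Lemma cont_of_deriv (f : R -> R) x : ex_derive f x -> continuous f x.
Proof. apply (ex_derive_continuous (V:=R_NormedModule)). Qed.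

Lemma gpdf_eq sigma theta s : gauss_pdf sigma theta s = gpdf sigma (sgn theta) s.
Proof. reflexivity. Qed.

Lemma sqrt2PI_pos : 0 < sqrt (2 * PI).
Proof. apply sqrt_lt_R0. pose proof PI_RGT_0; lra. Qed.

Lemma gauss_pos sigma theta s : 0 < sigma -> 0 < gauss_pdf sigma theta s.
Proof.
  intros Hs. unfold gauss_pdf. apply Rdiv_lt_0_compat. apply exp_pos.
  apply Rmult_lt_0_compat; auto. apply sqrt2PI_pos.
Qed.

Lemma Integ_gauss sigma theta : 0 < sigma -> Integ (gauss_pdf sigma theta) 1.
Proof. intros; apply Integ_gpdf; auto. Qed.

Lemma gauss_cont sigma theta x : 0 < sigma -> continuous (gauss_pdf sigma theta) x.
Proof.
  intros Hs. apply cont_of_deriv. unfold gauss_pdf. pose proof sqrt2PI_pos. auto_derive. nzt.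
Qed.

Lemma intended_lt sigma l s : s < thr sigma l -> intended sigma l s = false.
Proof. intros H; unfold intended; destruct (Rlt_dec (thr sigma l) s); auto; lra. Qed.

Lemma intended_gt sigma l s : thr sigma l < s -> intended sigma l s = true.
Proof. intros H; unfold intended; destruct (Rlt_dec (thr sigma l) s); auto; lra. Qed.

Lemma flip_lt sigma eps l s : s < thr sigma l ->
  flip_prob sigma eps l s = / 2 * exp (- eps * (thr sigma l - s)).
Proof. intros H. unfold flip_prob. rewrite Rabs_left by lra. f_equal. f_equal. ring. Qed.

Lemma flip_gt sigma eps l s : thr sigma l < s ->
  flip_prob sigma eps l s = / 2 * exp (- eps * (s - thr sigma l)).
Proof. intros H. unfold flip_prob. rewrite Rabs_right by lra. auto. Qed.

Lemma flip_bounds sigma eps l s : 0 < eps -> 0 < flip_prob sigma eps l s <= / 2.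
Proof.
  intros He. unfold flip_prob. split.
  - apply Rmult_lt_0_compat. lra. apply exp_pos.
  - assert (exp (- eps * Rabs (s - thr sigma l)) <= 1).
    { rewrite <- exp_0. destruct (Req_dec (- eps * Rabs (s - thr sigma l)) 0) as [E|E].
      rewrite E; lra. apply Rlt_le, exp_increasing.
      pose proof (Rabs_pos (s - thr sigma l)). nra. }
    lra.
Qed.

Definition kern (sigma eps l : R) (x : bool) (s : R) : R :=
  if Bool.eqb (intended sigma l s) x then 1 - flip_prob sigma eps l s else flip_prob sigma eps l s.

Lemma kern_bounds sigma eps l x s : 0 < eps ->
  flip_prob sigma eps l s <= kern sigma eps l x s <= 1 - flip_prob sigma eps l s.
Proof.
  intros He. pose proof (flip_bounds sigma eps l s He). unfold kern.
  destruct (Bool.eqb (intended sigma l s) x); lra.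
Qed.

Lemma kern_sum sigma eps l s : kern sigma eps l true s + kern sigma eps l false s = 1.
Proof. unfold kern. destruct (intended sigma l s); simpl; ring. Qed.

Definition repf sigma eps l theta x s := gauss_pdf sigma theta s * kern sigma eps l x s.
Definition corf sigma l theta s :=
  gauss_pdf sigma theta s * (if Bool.eqb (intended sigma l s) theta then 1 else 0).

Lemma repf_ex sigma eps l theta x : 0 < sigma -> forall a b, ex_RInt (repf sigma eps l theta x) a b.
Proof.
  intros Hs.
  set (t := thr sigma l).
  apply (ex_pw _
    (fun s => gauss_pdf sigma theta s * (if x then / 2 * exp (- eps * (t - s)) else 1 - / 2 * exp (- eps * (t - s))))
    (fun s => gauss_pdf sigma theta s * (if x then 1 - / 2 * exp (- eps * (s - t)) else / 2 * exp (- eps * (s - t))))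
    t).
  - intros y. apply cont_of_deriv. unfold gauss_pdf. pose proof sqrt2PI_pos.
    destruct x; auto_derive; nzt.
  - intros y. apply cont_of_deriv. unfold gauss_pdf. pose proof sqrt2PI_pos.
    destruct x; auto_derive; nzt.
  - intros s Hs'. unfold repf, kern. rewrite intended_lt by auto. rewrite flip_lt by auto.
    destruct x; reflexivity.
  - intros s Hs'. unfold repf, kern. rewrite intended_gt by auto. rewrite flip_gt by auto.
    destruct x; reflexivity.
Qed.

Lemma corf_ex sigma l theta : 0 < sigma -> forall a b, ex_RInt (corf sigma l theta) a b.
Proof.
  intros Hs.
  apply (ex_pw _
    (fun s => gauss_pdf sigma theta s * (if theta then 0 else 1))
    (fun s => gauss_pdf sigma theta s * (if theta then 1 else 0))
    (thr sigma l)).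
  - intros y. apply cont_of_deriv. unfold gauss_pdf. pose proof sqrt2PI_pos.
    destruct theta; auto_derive; nzt.
  - intros y. apply cont_of_deriv. unfold gauss_pdf. pose proof sqrt2PI_pos.
    destruct theta; auto_derive; nzt.
  - intros s Hs'. unfold corf. rewrite intended_lt by auto. destruct theta; reflexivity.
  - intros s Hs'. unfold corf. rewrite intended_gt by auto. destruct theta; reflexivity.
Qed.

Lemma rep_Integ sigma eps l theta x : 0 < sigma -> 0 < eps ->
  Integ (repf sigma eps l theta x) (report_prob sigma eps l theta x).
Proof.
  intros Hs He.
  destruct (Integ_dom (repf sigma eps l theta x) (gauss_pdf sigma theta) 1) as [v Hv].
  - apply repf_ex; auto.
  - intros s. unfold repf. pose proof (gauss_pos sigma theta s Hs).
    pose proof (kern_bounds sigma eps l x s He). pose proof (flip_bounds sigma eps l s He).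
    rewrite Rabs_right. 2: apply Rle_ge, Rmult_le_pos; lra.
    assert (kern sigma eps l x s <= 1) by lra. nra.
  - apply Integ_gauss; auto.
  - replace (report_prob sigma eps l theta x) with v; auto.
    unfold report_prob. symmetry. apply (Integ_int_R _ _ Hv).
Qed.

Lemma cor_Integ sigma l theta : 0 < sigma ->
  Integ (corf sigma l theta) (correct_given sigma l theta).
Proof.
  intros Hs.
  destruct (Integ_dom (corf sigma l theta) (gauss_pdf sigma theta) 1) as [v Hv].
  - apply corf_ex; auto.
  - intros s. unfold corf. pose proof (gauss_pos sigma theta s Hs).
    destruct (Bool.eqb (intended sigma l s) theta); rewrite Rabs_right; nra.
  - apply Integ_gauss; auto.
  - replace (correct_given sigma l theta) with v; auto.
    unfold correct_given. symmetry. apply (Integ_int_R _ _ Hv).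
Qed.

Lemma rep_sum sigma eps l theta : 0 < sigma -> 0 < eps ->
  report_prob sigma eps l theta true + report_prob sigma eps l theta false = 1.
Proof.
  intros Hs He.
  pose proof (Integ_plus _ _ _ _ (rep_Integ sigma eps l theta true Hs He) (rep_Integ sigma eps l theta false Hs He)) as H.
  apply (Integ_unique (gauss_pdf sigma theta)); auto.
  eapply Integ_ext; [|exact H]. intros s. unfold repf. rewrite <- Rmult_plus_distr_l, kern_sum. ring.
  apply Integ_gauss; auto.
Qed.

Lemma cor_bounds sigma l theta : 0 < sigma -> 0 <= correct_given sigma l theta <= 1.
Proof.
  intros Hs. split.
  - apply (Integ_nonneg (corf sigma l theta)). intros s. unfold corf.
    pose proof (gauss_pos sigma theta s Hs). destruct (Bool.eqb _ _); lra.
    apply cor_Integ; auto.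
  - apply (Integ_le (corf sigma l theta) (gauss_pdf sigma theta)).
    intros s. unfold corf. pose proof (gauss_pos sigma theta s Hs). destruct (Bool.eqb _ _); lra.
    apply cor_Integ; auto. apply Integ_gauss; auto.
Qed.

Lemma rep_pos sigma eps l theta x : 0 < sigma -> 0 < eps -> 0 < report_prob sigma eps l theta x.
Proof.
  intros Hs He.
  set (t := thr sigma l).
  set (c0 := exp (- 4 / (2 * sigma ^ 2)) / (sigma * sqrt (2 * PI)) * (/ 2 * exp (- eps * (1 + Rabs t)))).
  assert (Hc0 : 0 < c0).
  { unfold c0. apply Rmult_lt_0_compat. apply Rdiv_lt_0_compat. apply exp_pos.
    apply Rmult_lt_0_compat; auto. apply sqrt2PI_pos. apply Rmult_lt_0_compat. lra. apply exp_pos. }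
  apply Rlt_le_trans with (RInt (fun _ => c0) 0 1).
  { rewrite (RInt_const (V:=R_CompleteNormedModule)). unfold scal; simpl; unfold mult; simpl. lra. }
  apply Rle_trans with (RInt (repf sigma eps l theta x) 0 1).
  2:{ apply Integ_nonneg_ge. intros s. unfold repf.
      pose proof (gauss_pos sigma theta s Hs). pose proof (kern_bounds sigma eps l x s He).
      pose proof (flip_bounds sigma eps l s He). nra.
      apply rep_Integ; auto. lra. }
  apply RInt_le. lra. apply (ex_RInt_const (V:=R_NormedModule)). apply repf_ex; auto.
  intros s Hs01. unfold repf, c0.
  apply Rmult_le_compat.
  - apply Rlt_le, Rdiv_lt_0_compat. apply exp_pos. apply Rmult_lt_0_compat; auto. apply sqrt2PI_pos.
  - apply Rlt_le, Rmult_lt_0_compat. lra. apply exp_pos.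
  - unfold gauss_pdf. unfold Rdiv. apply Rmult_le_compat_r.
    apply Rlt_le, Rinv_0_lt_compat. apply Rmult_lt_0_compat; auto. apply sqrt2PI_pos.
    apply exp_le_3 || idtac.
    destruct (Req_dec (- 4 * / (2 * sigma ^ 2)) (- (s - sgn theta) ^ 2 * / (2 * sigma ^ 2))) as [E|E].
    rewrite E; lra.
    apply Rlt_le, exp_increasing.
    assert ((s - sgn theta) ^ 2 <= 4). { destruct theta; simpl; nra. }
    assert (0 < / (2 * sigma ^ 2)). { apply Rinv_0_lt_compat. nra. }
    assert (- 4 * / (2 * sigma ^ 2) <= - (s - sgn theta) ^ 2 * / (2 * sigma ^ 2)) by nra.
    lra.
  - pose proof (kern_bounds sigma eps l x s He). eapply Rle_trans; [|apply H].
    unfold flip_prob. apply Rmult_le_compat_l. lra.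
    destruct (Req_dec (- eps * (1 + Rabs t)) (- eps * Rabs (s - thr sigma l))) as [E|E].
    rewrite E; lra.
    apply Rlt_le, exp_increasing.
    assert (Rabs (s - thr sigma l) <= 1 + Rabs t).
    { assert (Rabs (s - thr sigma l) <= Rabs s + Rabs (thr sigma l)).
      { unfold Rminus. rewrite <- (Rabs_Ropp (thr sigma l)). apply Rabs_triang. }
      rewrite (Rabs_right s) in H0 by lra. unfold t. lra. }
    nra.
Qed.


Lemma exp_mono x y : x <= y -> exp x <= exp y.
Proof. intros H. destruct (Req_dec x y). subst; lra. apply Rlt_le, exp_increasing; lra. Qed.

Lemma kernF_form sigma eps l s :
  kern sigma eps l false s =
  if Rlt_dec (thr sigma l) s then / 2 * exp (- eps * (s - thr sigma l))
  else 1 - / 2 * exp (- eps * (thr sigma l - s)).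
Proof.
  unfold kern, intended, flip_prob. destruct (Rlt_dec (thr sigma l) s); simpl.
  - rewrite Rabs_right by lra. auto.
  - rewrite Rabs_left1 by lra. do 3 f_equal. ring.
Qed.

Lemma kernF_mono sigma eps l s1 s2 : 0 < eps -> s1 <= s2 ->
  kern sigma eps l false s2 <= kern sigma eps l false s1.
Proof.
  intros He H. rewrite !kernF_form. set (t := thr sigma l).
  destruct (Rlt_dec t s1); destruct (Rlt_dec t s2).
  - apply Rmult_le_compat_l. lra. apply exp_mono. nra.
  - lra.
  - assert (exp (- eps * (t - s1)) <= 1). { rewrite <- exp_0. apply exp_mono. nra. }
    assert (exp (- eps * (s2 - t)) <= 1). { rewrite <- exp_0. apply exp_mono. nra. }
    lra.
  - assert (exp (- eps * (t - s1)) <= exp (- eps * (t - s2))). { apply exp_mono. nra. }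
    lra.
Qed.

Lemma kernF_gap sigma eps l : 0 < eps ->
  / 2 * (1 - exp (- eps)) * exp (- eps * Rabs (thr sigma l)) <=
  kern sigma eps l false (-1) - kern sigma eps l false 0.
Proof.
  intros He. rewrite !kernF_form. set (t := thr sigma l).
  assert (E1 : exp (- eps) <= 1). { rewrite <- exp_0. apply exp_mono. lra. }
  destruct (Rlt_dec t (-1)); destruct (Rlt_dec t 0); try lra.
  - (* t < -1 *)
    rewrite Rabs_left by lra.
    replace (- eps * (-1 - t)) with (eps + - eps * - t) by ring.
    replace (- eps * (0 - t)) with (- eps * - t) by ring.
    rewrite exp_plus.
    assert (exp eps * exp (- eps) = 1). { rewrite <- exp_plus. replace (eps + - eps) with 0 by ring. apply exp_0. }
    pose proof (exp_pos (- eps * - t)). pose proof (exp_pos eps). pose proof (exp_pos (- eps)).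
    assert (exp eps + exp (- eps) >= 2).
    { assert (0 <= (exp eps - 1) ^ 2 * exp (- eps)) by (apply Rmult_le_pos; [apply pow2_ge_0 | lra]).
      replace ((exp eps - 1) ^ 2 * exp (- eps)) with (exp eps * (exp eps * exp (- eps)) - 2 * (exp eps * exp (- eps)) + exp (- eps)) in H3 by ring.
      rewrite H in H3. lra. }
    nra.
  - (* -1 <= t < 0 *)
    rewrite Rabs_left by lra.
    assert (K : exp (- eps * (t - -1)) = exp (- eps) * / exp (- eps * - t))
      by (rewrite <- exp_Ropp, <- exp_plus; f_equal; ring).
    rewrite K. replace (- eps * (0 - t)) with (- eps * - t) by ring.
    set (u := exp (- eps * - t)).
    set (E := exp (- eps)).
    assert (Hu1 : u <= 1). { unfold u; rewrite <- exp_0; apply exp_mono; nra. }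
    assert (HuE : E <= u). { unfold u, E; apply exp_mono; nra. }
    assert (HE : 0 < E) by (apply exp_pos).
    assert (Hu : 0 < u) by lra.
    apply Rmult_le_reg_r with (2 * u). lra.
    replace ((1 - / 2 * (E * / u) - / 2 * u) * (2 * u)) with (2 * u - E - u * u) by (field; lra).
    assert (0 <= (1 - u) * ((2 - E) * u - E)).
    { apply Rmult_le_pos. lra. nra. }
    nra.
  - (* t >= 0 *)
    rewrite Rabs_right by lra.
    replace (- eps * (t - -1)) with (- eps + - eps * t) by ring.
    replace (- eps * (t - 0)) with (- eps * t) by ring.
    rewrite exp_plus. pose proof (exp_pos (- eps * t)). nra.
Qed.

Lemma gauss_cmp sigma s : 0 < sigma ->
  (s <= 0 -> gauss_pdf sigma true s <= gauss_pdf sigma false s) /\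
  (0 <= s -> gauss_pdf sigma false s <= gauss_pdf sigma true s).
Proof.
  intros Hs. unfold gauss_pdf, sgn. pose proof sqrt2PI_pos.
  assert (D : 0 < / (sigma * sqrt (2 * PI))) by (apply Rinv_0_lt_compat, Rmult_lt_0_compat; auto).
  assert (D2 : 0 < / (2 * sigma ^ 2)) by (apply Rinv_0_lt_compat; nra).
  unfold Rdiv. split; intros Hs0; apply Rmult_le_compat_r; try lra; apply exp_mono;
  apply Rmult_le_compat_r; try lra; nra.
Qed.

Definition mgap (sigma : R) := (exp (- 1 / (2 * sigma ^ 2)) - exp (- 4 / (2 * sigma ^ 2))) / (sigma * sqrt (2 * PI)).

Lemma mgap_pos sigma : 0 < sigma -> 0 < mgap sigma.
Proof.
  intros Hs. unfold mgap. apply Rdiv_lt_0_compat.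
  assert (exp (- 4 / (2 * sigma ^ 2)) < exp (- 1 / (2 * sigma ^ 2))).
  { apply exp_increasing. unfold Rdiv. apply Rmult_lt_compat_r. apply Rinv_0_lt_compat; nra. lra. }
  lra. apply Rmult_lt_0_compat; auto. apply sqrt2PI_pos.
Qed.

Lemma gauss_diff_lb sigma s : 0 < sigma -> -2 <= s <= -1 ->
  mgap sigma <= gauss_pdf sigma false s - gauss_pdf sigma true s.
Proof.
  intros Hs Hs0. unfold mgap, gauss_pdf, sgn. pose proof sqrt2PI_pos.
  assert (D2 : 0 < / (2 * sigma ^ 2)) by (apply Rinv_0_lt_compat; nra).
  unfold Rdiv. rewrite <- Rmult_minus_distr_r. apply Rmult_le_compat_r.
  apply Rlt_le, Rinv_0_lt_compat, Rmult_lt_0_compat; auto.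
  assert (exp (- 1 * / (2 * sigma ^ 2)) <= exp (- (s - -1) ^ 2 * / (2 * sigma ^ 2))).
  { apply exp_mono. apply Rmult_le_compat_r; try lra. nra. }
  assert (exp (- (s - 1) ^ 2 * / (2 * sigma ^ 2)) <= exp (- 4 * / (2 * sigma ^ 2))).
  { apply exp_mono. apply Rmult_le_compat_r; try lra. nra. }
  lra.
Qed.

Lemma qdiff_lb sigma eps l : 0 < sigma -> 0 < eps ->
  mgap sigma * (/ 2 * (1 - exp (- eps)) * exp (- eps * Rabs (thr sigma l))) <=
  report_prob sigma eps l false false - report_prob sigma eps l true false.
Proof.
  intros Hs He.
  set (k0 := kern sigma eps l false 0).
  set (phi := fun s => (gauss_pdf sigma false s - gauss_pdf sigma true s) * (kern sigma eps l false s - k0)).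
  assert (HI : Integ phi (report_prob sigma eps l false false - report_prob sigma eps l true false)).
  { pose proof (Integ_plus _ _ _ _
      (Integ_minus _ _ _ _ (Integ_minus _ _ _ _ (rep_Integ sigma eps l false false Hs He)
                                              (rep_Integ sigma eps l true false Hs He))
                           (Integ_scal k0 _ _ (Integ_gauss sigma false Hs)))
      (Integ_scal k0 _ _ (Integ_gauss sigma true Hs))) as H.
    replace (report_prob sigma eps l false false - report_prob sigma eps l true false -
             k0 * 1 + k0 * 1) with (report_prob sigma eps l false false - report_prob sigma eps l true false) in H by ring.
    eapply Integ_ext; [|exact H]. intros s. unfold phi, repf. ring. }
  assert (Hphi : forall s, 0 <= phi s).
  { intros s. unfold phi. destruct (gauss_cmp sigma s Hs) as [C1 C2].
    destruct (Rle_dec s 0).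
    - apply Rmult_le_pos. specialize (C1 r); lra.
      pose proof (kernF_mono sigma eps l s 0 He r). unfold k0; lra.
    - assert (0 <= s) by lra.
      pose proof (kernF_mono sigma eps l 0 s He H). specialize (C2 H).
      unfold k0. nra. }
  apply Rle_trans with (RInt phi (-2) (-1)).
  2:{ apply Integ_nonneg_ge; auto. lra. }
  pose proof (kernF_gap sigma eps l He).
  pose proof (mgap_pos sigma Hs).
  apply Rle_trans with (RInt (fun _ => mgap sigma * (kern sigma eps l false (-1) - k0)) (-2) (-1)).
  { rewrite (RInt_const (V:=R_CompleteNormedModule)). unfold scal; simpl; unfold mult; simpl.
    replace (-1 - -2) with 1 by ring. rewrite Rmult_1_l. apply Rmult_le_compat_l; unfold k0; lra. }
  apply RInt_le. lra. apply (ex_RInt_const (V:=R_NormedModule)). apply (proj1 HI).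
  intros s Hs0. unfold phi.
  pose proof (gauss_diff_lb sigma s Hs (conj (Rlt_le _ _ (proj1 Hs0)) (Rlt_le _ _ (proj2 Hs0)))).
  pose proof (kernF_mono sigma eps l s (-1) He (Rlt_le _ _ (proj2 Hs0))).
  unfold k0 in *. 
  pose proof (kernF_mono sigma eps l (-1) 0 He ltac:(lra)). apply Rmult_le_compat; lra.
Qed.

Lemma info_lb qa qb : 0 <= qa <= 1 -> 0 <= qb <= 1 ->
  (qb - qa) ^ 2 / 8 <= 1 - sqrt ((1 - qa) * (1 - qb)) - sqrt (qa * qb).
Proof.
  intros Ha Hb.
  rewrite !sqrt_mult_alt by lra.
  pose proof (sqrt_sqrt qa ltac:(lra)). pose proof (sqrt_sqrt qb ltac:(lra)).
  pose proof (sqrt_sqrt (1 - qa) ltac:(lra)). pose proof (sqrt_sqrt (1 - qb) ltac:(lra)).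
  pose proof (sqrt_pos qa). pose proof (sqrt_pos qb). pose proof (sqrt_pos (1 - qa)). pose proof (sqrt_pos (1 - qb)).
  set (x := sqrt qa) in *. set (y := sqrt qb) in *. set (X := sqrt (1 - qa)) in *. set (Y := sqrt (1 - qb)) in *.
  assert (x <= 1) by nra. assert (y <= 1) by nra.
  assert (E : 1 - X * Y - x * y = / 2 * ((x - y) ^ 2 + (X - Y) ^ 2)) by nra.
  rewrite E.
  replace (qb - qa) with ((y - x) * (y + x)) by nra.
  assert (0 <= (X - Y) ^ 2) by apply pow2_ge_0.
  assert ((y - x) ^ 2 * (y + x) ^ 2 <= 4 * (y - x) ^ 2).
  { assert ((y + x) ^ 2 <= 4) by nra. assert (0 <= (y - x) ^ 2) by apply pow2_ge_0. nra. }
  replace (((y - x) * (y + x)) ^ 2) with ((y - x) ^ 2 * (y + x) ^ 2) by ring.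
  replace ((x - y) ^ 2) with ((y - x) ^ 2) by ring.
  lra.
Qed.

Lemma err_true_bound sigma l : 0 < sigma ->
  1 - correct_given sigma l true <= exp (2 / sigma ^ 2 * thr sigma l).
Proof.
  intros Hs. set (mu := 2 / sigma ^ 2). set (t := thr sigma l).
  assert (HI : Integ (fun s => exp (mu * t) * (gpdf sigma 1 s * exp (- mu * s))) (exp (mu * t) * exp (- mu * 1 + (- mu) ^ 2 * sigma ^ 2 / 2))).
  { apply Integ_scal. apply Integ_tilt; auto. }
  replace (- mu * 1 + (- mu) ^ 2 * sigma ^ 2 / 2) with 0 in HI by (unfold mu; field; lra).
  rewrite exp_0, Rmult_1_r in HI.
  assert (I1 : Integ (fun s => gauss_pdf sigma true s - corf sigma l true s) (1 - correct_given sigma l true))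
    by (apply Integ_minus; [apply Integ_gauss; auto | apply cor_Integ; auto]).
  refine (Integ_le _ _ _ _ _ I1 HI).
  intros s. unfold corf. pose proof (gauss_pos sigma true s Hs) as G.
  change (gpdf sigma 1 s) with (gauss_pdf sigma true s).
  assert (0 < mu) by (unfold mu; apply Rdiv_lt_0_compat; nra).
  unfold intended. fold t. destruct (Rlt_dec t s); simpl.
  - pose proof (exp_pos (mu * t)). pose proof (exp_pos (- mu * s)).
    assert (0 <= exp (mu * t) * (gauss_pdf sigma true s * exp (- mu * s))).
    { apply Rmult_le_pos; [lra|]. apply Rmult_le_pos; lra. }
    lra.
  - rewrite <- Rmult_assoc, (Rmult_comm (exp (mu * t))), Rmult_assoc, <- exp_plus.
    assert (1 <= exp (mu * t + - mu * s)).
    { rewrite <- exp_0. apply exp_mono. nra. }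
    nra.
Qed.

Lemma err_false_bound sigma l : 0 < sigma ->
  1 - correct_given sigma l false <= exp (- (2 / sigma ^ 2) * thr sigma l).
Proof.
  intros Hs. set (mu := 2 / sigma ^ 2). set (t := thr sigma l).
  assert (HI : Integ (fun s => exp (- mu * t) * (gpdf sigma (-1) s * exp (mu * s))) (exp (- mu * t) * exp (mu * (-1) + mu ^ 2 * sigma ^ 2 / 2))).
  { apply Integ_scal. apply Integ_tilt; auto. }
  replace (mu * (-1) + mu ^ 2 * sigma ^ 2 / 2) with 0 in HI by (unfold mu; field; lra).
  rewrite exp_0, Rmult_1_r in HI.
  assert (I1 : Integ (fun s => gauss_pdf sigma false s - corf sigma l false s) (1 - correct_given sigma l false))
    by (apply Integ_minus; [apply Integ_gauss; auto | apply cor_Integ; auto]).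
  refine (Integ_le _ _ _ _ _ I1 HI).
  intros s. unfold corf. pose proof (gauss_pos sigma false s Hs) as G.
  change (gpdf sigma (-1) s) with (gauss_pdf sigma false s).
  assert (0 < mu) by (unfold mu; apply Rdiv_lt_0_compat; nra).
  unfold intended. fold t. destruct (Rlt_dec t s); simpl.
  - rewrite <- Rmult_assoc, (Rmult_comm (exp (- mu * t))), Rmult_assoc, <- exp_plus.
    assert (1 <= exp (- mu * t + mu * s)).
    { rewrite <- exp_0. apply exp_mono. nra. }
    nra.
  - pose proof (exp_pos (- mu * t)). pose proof (exp_pos (mu * s)).
    assert (0 <= exp (- mu * t) * (gauss_pdf sigma false s * exp (mu * s))).
    { apply Rmult_le_pos; [lra|]. apply Rmult_le_pos; lra. }
    lra.
Qed.

Lemma g_bound sigma l : 0 < sigma ->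
  exp (l / 2) * (1 - correct_given sigma l true) + exp (- l / 2) * (1 - correct_given sigma l false)
  <= 2 * exp (- Rabs l / 2).
Proof.
  intros Hs.
  pose proof (err_true_bound sigma l Hs) as T. pose proof (err_false_bound sigma l Hs) as F.
  pose proof (cor_bounds sigma l true Hs). pose proof (cor_bounds sigma l false Hs).
  unfold thr in T, F.
  replace (2 / sigma ^ 2 * (- sigma ^ 2 * l / 2)) with (- l) in T by (field; lra).
  replace (- (2 / sigma ^ 2) * (- sigma ^ 2 * l / 2)) with l in F by (field; lra).
  assert (T1 : exp (l / 2) * (1 - correct_given sigma l true) <= exp (- l / 2)).
  { replace (exp (- l / 2)) with (exp (l / 2) * exp (- l)).
    apply Rmult_le_compat_l. apply Rlt_le, exp_pos. auto.
    rewrite <- exp_plus. f_equal. field. }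
  assert (T2 : exp (- l / 2) * (1 - correct_given sigma l false) <= exp (l / 2)).
  { replace (exp (l / 2)) with (exp (- l / 2) * exp l).
    apply Rmult_le_compat_l. apply Rlt_le, exp_pos. auto.
    rewrite <- exp_plus. f_equal. field. }
  assert (T3 : exp (l / 2) * (1 - correct_given sigma l true) <= exp (l / 2)).
  { pose proof (exp_pos (l / 2)). nra. }
  assert (T4 : exp (- l / 2) * (1 - correct_given sigma l false) <= exp (- l / 2)).
  { pose proof (exp_pos (- l / 2)). nra. }
  destruct (Rle_dec 0 l).
  - rewrite Rabs_right by lra. replace (- l / 2) with (- l / 2) by ring. lra.
  - rewrite Rabs_left by lra. replace (- - l / 2) with (l / 2) by field. lra.
Qed.


Lemma exp_half_ln r : 0 < r -> exp (ln r / 2) = sqrt r.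
Proof.
  intros Hr. set (y := exp (ln r / 2)).
  assert (y * y = r).
  { unfold y. rewrite <- exp_plus. replace (ln r / 2 + ln r / 2) with (ln r) by field. apply exp_ln; auto. }
  rewrite <- H. rewrite sqrt_square; auto. unfold y; apply Rlt_le, exp_pos.
Qed.

Lemma alg_up p m L : 0 < p -> 0 < m ->
  sqrt (p * m) * exp ((L + ln (p / m)) / 2) = p * exp (L / 2) /\
  sqrt (p * m) * exp (- ((L + ln (p / m)) / 2)) = m * exp (- L / 2).
Proof.
  intros Hp Hm.
  assert (Hr : 0 < p / m) by (apply Rdiv_lt_0_compat; auto).
  replace ((L + ln (p / m)) / 2) with (L / 2 + ln (p / m) / 2) by field.
  rewrite exp_plus, exp_half_ln by auto.
  pose proof (sqrt_lt_R0 (p / m) Hr) as Sr.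
  assert (E1 : sqrt (p * m) * sqrt (p / m) = p).
  { rewrite <- sqrt_mult_alt by nra. replace (p * m * (p / m)) with (p * p) by (field; lra).
    apply sqrt_square; lra. }
  assert (E2 : sqrt (p * m) = sqrt (p / m) * m).
  { replace (p * m) with (p / m * (m * m)) by (field; lra).
    rewrite sqrt_mult_alt by lra. rewrite sqrt_square; lra. }
  split.
  - rewrite <- Rmult_assoc, (Rmult_comm (sqrt (p * m))), Rmult_assoc, E1. ring.
  - rewrite Ropp_plus_distr, exp_plus. rewrite (exp_Ropp (ln (p / m) / 2)), exp_half_ln by auto.
    rewrite E2. replace (- (L / 2)) with (- L / 2) by field. field. lra.
Qed.

Definition ww sigma eps l x := sqrt (report_prob sigma eps l true x * report_prob sigma eps l false x).
Definition phi sigma eps l := exp (- (2 * eps) * Rabs (thr sigma l)).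

Fixpoint beta sigma eps k l : R :=
  match k with
  | O => 1
  | S k' => ww sigma eps l true * beta sigma eps k' (llr_update sigma eps l true)
          + ww sigma eps l false * beta sigma eps k' (llr_update sigma eps l false)
  end.

Fixpoint dd sigma eps k l : R :=
  match k with
  | O => phi sigma eps l
  | S k' => ww sigma eps l true * dd sigma eps k' (llr_update sigma eps l true)
          + ww sigma eps l false * dd sigma eps k' (llr_update sigma eps l false)
  end.

Definition ee sigma eps k l :=
  exp (l / 2) * (1 - correct_after sigma eps true k l) + exp (- l / 2) * (1 - correct_after sigma eps false k l).

Lemma ww_nonneg sigma eps l x : 0 <= ww sigma eps l x.
Proof. apply sqrt_pos. Qed.

Lemma ee_step sigma eps k l : 0 < sigma -> 0 < eps ->
  ee sigma eps (S k) l = ww sigma eps l true * ee sigma eps k (llr_update sigma eps l true)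
                        + ww sigma eps l false * ee sigma eps k (llr_update sigma eps l false).
Proof.
  intros Hs He. unfold ee, ww, llr_update. simpl correct_after.
  pose proof (rep_sum sigma eps l true Hs He). pose proof (rep_sum sigma eps l false Hs He).
  destruct (alg_up (report_prob sigma eps l true true) (report_prob sigma eps l false true) l)
    as [A1 A2]; try apply rep_pos; auto.
  destruct (alg_up (report_prob sigma eps l true false) (report_prob sigma eps l false false) l)
    as [B1 B2]; try apply rep_pos; auto.
  replace (- (l + ln (report_prob sigma eps l true true / report_prob sigma eps l false true)) / 2)
    with (- ((l + ln (report_prob sigma eps l true true / report_prob sigma eps l false true)) / 2)) by field.
  replace (- (l + ln (report_prob sigma eps l true false / report_prob sigma eps l false false)) / 2)
    with (- ((l + ln (report_prob sigma eps l true false / report_prob sigma eps l false false)) / 2)) by field.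
  set (x1 := exp ((l + ln (report_prob sigma eps l true true / report_prob sigma eps l false true)) / 2)) in *.
  set (x2 := exp (- ((l + ln (report_prob sigma eps l true true / report_prob sigma eps l false true)) / 2))) in *.
  set (x3 := exp ((l + ln (report_prob sigma eps l true false / report_prob sigma eps l false false)) / 2)) in *.
  set (x4 := exp (- ((l + ln (report_prob sigma eps l true false / report_prob sigma eps l false false)) / 2))) in *.
  set (w1 := sqrt (report_prob sigma eps l true true * report_prob sigma eps l false true)) in *.
  set (w2 := sqrt (report_prob sigma eps l true false * report_prob sigma eps l false false)) in *.
  set (pT := report_prob sigma eps l true true) in *.
  set (pF := report_prob sigma eps l true false) in *.
  set (mT := report_prob sigma eps l false true) in *.
  set (mF := report_prob sigma eps l false false) in *.
  transitivity (exp (l / 2) * (pT * (1 - correct_after sigma eps true k (l + ln (pT / mT))) + pF * (1 - correct_after sigma eps true k (l + ln (pF / mF))))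
    + exp (- l / 2) * (mT * (1 - correct_after sigma eps false k (l + ln (pT / mT))) + mF * (1 - correct_after sigma eps false k (l + ln (pF / mF))))).
  { unfold llr_update. fold pT pF mT mF.
    assert (E : forall A B a1 a2 b1 b2 pT pF mT mF : R, pT + pF = 1 -> mT + mF = 1 ->
      A * (1 - (pT * a1 + pF * a2)) + B * (1 - (mT * b1 + mF * b2)) =
      A * (pT * (1 - a1) + pF * (1 - a2)) + B * (mT * (1 - b1) + mF * (1 - b2))).
    { intros. assert (pF0 = 1 - pT0) by lra. assert (mF0 = 1 - mT0) by lra. subst. ring. }
    apply E; auto. }
  transitivity ((w1 * x1) * (1 - correct_after sigma eps true k (l + ln (pT / mT)))
               + (w2 * x3) * (1 - correct_after sigma eps true k (l + ln (pF / mF)))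
               + (w1 * x2) * (1 - correct_after sigma eps false k (l + ln (pT / mT)))
               + (w2 * x4) * (1 - correct_after sigma eps false k (l + ln (pF / mF)))).
  { rewrite A1, A2, B1, B2. ring. }
  ring.
Qed.

Definition cc sigma eps := (mgap sigma * (/ 2 * (1 - exp (- eps)))) ^ 2 / 8.

Lemma cc_pos sigma eps : 0 < sigma -> 0 < eps -> 0 < cc sigma eps.
Proof.
  intros Hs He. unfold cc. pose proof (mgap_pos sigma Hs).
  assert (exp (- eps) < 1). { rewrite <- exp_0. apply exp_increasing. lra. }
  assert (0 < mgap sigma * (/ 2 * (1 - exp (- eps)))) by (apply Rmult_lt_0_compat; lra).
  apply Rdiv_lt_0_compat; [|lra]. apply pow_lt; auto.
Qed.

Lemma wsum_bound sigma eps l : 0 < sigma -> 0 < eps ->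
  cc sigma eps * phi sigma eps l <= 1 - ww sigma eps l true - ww sigma eps l false.
Proof.
  intros Hs He.
  pose proof (rep_sum sigma eps l true Hs He). pose proof (rep_sum sigma eps l false Hs He).
  pose proof (rep_pos sigma eps l true true Hs He). pose proof (rep_pos sigma eps l true false Hs He).
  pose proof (rep_pos sigma eps l false true Hs He). pose proof (rep_pos sigma eps l false false Hs He).
  pose proof (qdiff_lb sigma eps l Hs He) as Q.
  set (qa := report_prob sigma eps l true false) in *.
  set (qb := report_prob sigma eps l false false) in *.
  pose proof (info_lb qa qb ltac:(lra) ltac:(lra)) as I.
  unfold ww. fold qa qb.
  replace (report_prob sigma eps l true true) with (1 - qa) by lra.
  replace (report_prob sigma eps l false true) with (1 - qb) by lra.
  eapply Rle_trans; [|apply I].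
  unfold cc, phi.
  set (A := mgap sigma * (/ 2 * (1 - exp (- eps)))) in *.
  assert (0 <= A).
  { unfold A. pose proof (mgap_pos sigma Hs).
    assert (exp (- eps) < 1). { rewrite <- exp_0. apply exp_increasing. lra. }
    apply Rmult_le_pos; lra. }
  replace (- (2 * eps) * Rabs (thr sigma l)) with (- eps * Rabs (thr sigma l) + - eps * Rabs (thr sigma l)) by ring.
  rewrite exp_plus.
  pose proof (exp_pos (- eps * Rabs (thr sigma l))).
  assert (A * exp (- eps * Rabs (thr sigma l)) <= qb - qa).
  { replace (A * exp (- eps * Rabs (thr sigma l))) with (mgap sigma * (/ 2 * (1 - exp (- eps)) * exp (- eps * Rabs (thr sigma l)))) by (unfold A; ring). auto. }
  assert (0 <= A * exp (- eps * Rabs (thr sigma l))) by nra.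
  assert ((A * exp (- eps * Rabs (thr sigma l))) ^ 2 <= (qb - qa) ^ 2) by (apply pow_incr; lra).
  replace (A ^ 2 / 8 * (exp (- eps * Rabs (thr sigma l)) * exp (- eps * Rabs (thr sigma l))))
    with ((A * exp (- eps * Rabs (thr sigma l))) ^ 2 / 8) by (field).
  lra.
Qed.

Lemma dd_nonneg sigma eps k l : 0 <= dd sigma eps k l.
Proof.
  revert l; induction k; intros l; simpl.
  - unfold phi; apply Rlt_le, exp_pos.
  - pose proof (ww_nonneg sigma eps l true). pose proof (ww_nonneg sigma eps l false).
    pose proof (IHk (llr_update sigma eps l true)). pose proof (IHk (llr_update sigma eps l false)). nra.
Qed.

Lemma beta_dd sigma eps k l : 0 < sigma -> 0 < eps ->
  cc sigma eps * dd sigma eps k l <= beta sigma eps k l - beta sigma eps (S k) l.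
Proof.
  intros Hs He. revert l; induction k; intros l.
  - simpl. pose proof (wsum_bound sigma eps l Hs He). lra.
  - change (cc sigma eps * (ww sigma eps l true * dd sigma eps k (llr_update sigma eps l true)
          + ww sigma eps l false * dd sigma eps k (llr_update sigma eps l false)) <=
       (ww sigma eps l true * beta sigma eps k (llr_update sigma eps l true)
          + ww sigma eps l false * beta sigma eps k (llr_update sigma eps l false)) -
       (ww sigma eps l true * beta sigma eps (S k) (llr_update sigma eps l true)
          + ww sigma eps l false * beta sigma eps (S k) (llr_update sigma eps l false))).
    pose proof (ww_nonneg sigma eps l true). pose proof (ww_nonneg sigma eps l false).
    pose proof (IHk (llr_update sigma eps l true)). pose proof (IHk (llr_update sigma eps l false)).
    nra.
Qed.

Lemma beta_le1 sigma eps k l : 0 < sigma -> 0 < eps -> beta sigma eps k l <= 1.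
Proof.
  intros Hs He. induction k.
  - simpl; lra.
  - pose proof (beta_dd sigma eps k l Hs He). pose proof (dd_nonneg sigma eps k l).
    pose proof (cc_pos sigma eps Hs He). nra.
Qed.

Lemma beta_nonneg sigma eps k l : 0 <= beta sigma eps k l.
Proof.
  revert l; induction k; intros l; simpl.
  - lra.
  - pose proof (ww_nonneg sigma eps l true). pose proof (ww_nonneg sigma eps l false).
    pose proof (IHk (llr_update sigma eps l true)). pose proof (IHk (llr_update sigma eps l false)). nra.
Qed.

Lemma dd_sum sigma eps N l : 0 < sigma -> 0 < eps ->
  cc sigma eps * sum_f_R0 (fun k => dd sigma eps k l) N <= 1 - beta sigma eps (S N) l.
Proof.
  intros Hs He. induction N.
  - pose proof (beta_dd sigma eps 0 l Hs He). change (sum_f_R0 (fun k => dd sigma eps k l) 0) with (dd sigma eps 0 l).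
    change (beta sigma eps 0 l) with 1 in H. lra.
  - pose proof (beta_dd sigma eps (S N) l Hs He).
    change (sum_f_R0 (fun k => dd sigma eps k l) (S N)) with (sum_f_R0 (fun k => dd sigma eps k l) N + dd sigma eps (S N) l).
    rewrite Rmult_plus_distr_l. lra.
Qed.

Lemma dd_lim sigma eps : 0 < sigma -> 0 < eps ->
  forall e, 0 < e -> exists N, forall k, (N <= k)%nat -> dd sigma eps k 0 < e.
Proof.
  intros Hs He e He'.
  set (Su := fun N => sum_f_R0 (fun k => dd sigma eps k 0) N).
  assert (G : Un_growing Su).
  { intros n. unfold Su.
    change (sum_f_R0 (fun k => dd sigma eps k 0) (S n)) with (sum_f_R0 (fun k => dd sigma eps k 0) n + dd sigma eps (S n) 0).
    pose proof (dd_nonneg sigma eps (S n) 0). lra. }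
  assert (B : has_ub Su).
  { exists (/ cc sigma eps). intros x [i ->]. unfold Su.
    pose proof (dd_sum sigma eps i 0 Hs He). pose proof (beta_nonneg sigma eps (S i) 0).
    pose proof (cc_pos sigma eps Hs He).
    apply Rmult_le_reg_l with (cc sigma eps); auto. rewrite Rinv_r by lra. lra. }
  destruct (CV_Cauchy Su (growing_cv Su G B) e He') as [N HN].
  exists (S N). intros k Hk.
  destruct k. lia.
  specialize (HN (S k) k ltac:(lia) ltac:(lia)).
  unfold Rdist, Su in HN.
  change (sum_f_R0 (fun k => dd sigma eps k 0) (S k)) with (sum_f_R0 (fun k => dd sigma eps k 0) k + dd sigma eps (S k) 0) in HN.
  replace (sum_f_R0 (fun k0 : nat => dd sigma eps k0 0) k + dd sigma eps (S k) 0 -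
       sum_f_R0 (fun k0 : nat => dd sigma eps k0 0) k) with (dd sigma eps (S k) 0) in HN by ring.
  rewrite Rabs_right in HN; auto. apply Rle_ge, dd_nonneg.
Qed.

Lemma ca_le1 sigma eps theta k l : 0 < sigma -> 0 < eps -> correct_after sigma eps theta k l <= 1.
Proof.
  intros Hs He. revert l; induction k; intros l; simpl.
  - apply cor_bounds; auto.
  - pose proof (rep_sum sigma eps l theta Hs He).
    pose proof (rep_pos sigma eps l theta true Hs He). pose proof (rep_pos sigma eps l theta false Hs He).
    pose proof (IHk (llr_update sigma eps l true)). pose proof (IHk (llr_update sigma eps l false)).
    nra.
Qed.

Lemma ee_nonneg sigma eps k l : 0 < sigma -> 0 < eps -> 0 <= ee sigma eps k l.
Proof.
  intros Hs He. unfold ee.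
  pose proof (ca_le1 sigma eps true k l Hs He). pose proof (ca_le1 sigma eps false k l Hs He).
  pose proof (exp_pos (l / 2)). pose proof (exp_pos (- l / 2)). nra.
Qed.

Lemma phi_abs sigma eps l : 0 < sigma -> phi sigma eps l = exp (- (eps * sigma ^ 2) * Rabs l).
Proof.
  intros Hs. unfold phi, thr. f_equal.
  replace (- sigma ^ 2 * l / 2) with ((- (sigma ^ 2 / 2)) * l) by field.
  rewrite Rabs_mult, Rabs_Ropp, Rabs_right by (apply Rle_ge; nra). field.
Qed.

Lemma ee_base sigma eps d : 0 < sigma -> 0 < eps -> 0 < d ->
  exists C, 0 <= C /\ forall l, ee sigma eps 0 l <= d + C * phi sigma eps l.
Proof.
  intros Hs He Hd.
  set (L := Rmax 0 (2 * ln (2 / d))).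
  set (kap := eps * sigma ^ 2).
  assert (Hk : 0 < kap) by (unfold kap; apply Rmult_lt_0_compat; [lra | apply pow_lt; lra]).
  exists (2 * exp (kap * L)). split. pose proof (exp_pos (kap * L)); lra.
  intros l.
  assert (G : ee sigma eps 0 l <= 2 * exp (- Rabs l / 2)) by (apply g_bound; auto).
  rewrite phi_abs by auto. fold kap.
  assert (HL0 : 0 <= L) by (unfold L; apply Rmax_l).
  pose proof (exp_pos (kap * L)). pose proof (exp_pos (- kap * Rabs l)).
  destruct (Rle_dec L (Rabs l)).
  - assert (exp (- Rabs l / 2) <= d / 2).
    { replace (d / 2) with (exp (- ln (2 / d))).
      apply exp_mono. assert (2 * ln (2 / d) <= L) by (unfold L; apply Rmax_r). lra.
      rewrite exp_Ropp, exp_ln. field. lra. apply Rdiv_lt_0_compat; lra. }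
    assert (0 <= 2 * exp (kap * L) * exp (- kap * Rabs l)) by nra.
    lra.
  - assert (exp (- Rabs l / 2) <= 1). { rewrite <- exp_0. apply exp_mono. pose proof (Rabs_pos l). lra. }
    assert (1 <= exp (kap * L) * exp (- kap * Rabs l)).
    { rewrite <- exp_plus, <- exp_0. apply exp_mono. nra. }
    lra.
Qed.

Lemma ee_bound sigma eps d C : 0 < sigma -> 0 < eps -> 0 <= d -> 0 <= C ->
  (forall l, ee sigma eps 0 l <= d + C * phi sigma eps l) ->
  forall k l, ee sigma eps k l <= d * beta sigma eps k l + C * dd sigma eps k l.
Proof.
  intros Hs He Hd HC Hb k. induction k; intros l.
  - simpl. rewrite Rmult_1_r. apply Hb.
  - rewrite ee_step by auto.
    change (ee sigma eps (S k) l) with (ee sigma eps (S k) l).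
    simpl beta. simpl dd.
    pose proof (ww_nonneg sigma eps l true). pose proof (ww_nonneg sigma eps l false).
    pose proof (IHk (llr_update sigma eps l true)). pose proof (IHk (llr_update sigma eps l false)).
    nra.
Qed.

Theorem theorem5 (sigma eps : R) (Hsigma : 0 < sigma) (Heps : 0 < eps) :
  is_lim_seq (fun n : nat => prob_correct sigma eps n) 1.
Proof.
  apply is_lim_seq_spec. intros e.
  pose proof (cond_pos e) as He.
  destruct (ee_base sigma eps (e / 2) Hsigma Heps ltac:(lra)) as [C [HC Hb]].
  pose proof (ee_bound sigma eps (e / 2) C Hsigma Heps ltac:(lra) HC Hb) as EB.
  destruct (dd_lim sigma eps Hsigma Heps (e / (2 * (C + 1)))) as [N HN].
  { apply Rdiv_lt_0_compat; lra. }
  exists (S N). intros n Hn.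
  assert (E : prob_correct sigma eps n = 1 - / 2 * ee sigma eps (n - 1) 0).
  { unfold prob_correct, ee. replace (0 / 2) with 0 by field. replace (- 0 / 2) with 0 by field.
    rewrite exp_0. lra. }
  rewrite E.
  specialize (EB (n - 1)%nat 0). specialize (HN (n - 1)%nat ltac:(lia)).
  pose proof (ee_nonneg sigma eps (n - 1) 0 Hsigma Heps).
  pose proof (beta_le1 sigma eps (n - 1) 0 Hsigma Heps).
  pose proof (beta_nonneg sigma eps (n - 1) 0).
  pose proof (dd_nonneg sigma eps (n - 1) 0).
  assert (C * dd sigma eps (n - 1) 0 < e / 2).
  { apply Rle_lt_trans with ((C + 1) * dd sigma eps (n - 1) 0). nra.
    apply Rmult_lt_reg_l with (/ (C + 1)). apply Rinv_0_lt_compat; lra.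
    rewrite <- Rmult_assoc, Rinv_l by lra. replace (/ (C + 1) * (e / 2)) with (e / (2 * (C + 1))) by (field; lra).
    lra. }
  rewrite Rabs_left1 by lra.
  nra.
Qed.
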